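(* Let $\Delta\ge 41$ be an integer and $k=\lceil 27\Delta\ln\Delta\rceil$. If $G$ is a graph with maximum degree $\Delta$ and $Y$ is an independent set of vertices in $G$, then the set $E_G(Y,V(G)\setminus Y)$ of edges with one end in $Y$ and the other in $V(G)\setminus Y$ can be partitioned into $k$ $G$-good sets.
   Context: All graphs are finite and simple; $\ln$ is the natural logarithm. A set $F$ of edges of $G$ is \emph{$G$-good} if no two distinct edges $e,f\in F$ satisfy either (i) $e$ and $f$ share no vertex and some edge of $G$ joins an endpoint of $e$ to an endpoint of $f$, or (ii) $e$ and $f$ lie in a common triangle of $G$. (A partition into $k$ sets may have some empty parts.) *)

(* Defs.v *)
From mathcomp Require Import all_boot.
From Stdlib Require Import Reals.
Set Implicit Arguments. Unset Strict Implicit. Unset Printing Implicit Defensive.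

Definition simple_graph (T : finType) (adj : rel T) : Prop :=
  symmetric adj /\ irreflexive adj.

Definition is_edge (T : finType) (adj : rel T) (f : {set T}) : bool :=
  [exists x, exists y, adj x y && (f == [set x; y])].

Definition degree (T : finType) (adj : rel T) (v : T) : nat :=
  #|[set u | adj v u]|.

Definition max_degree (T : finType) (adj : rel T) : nat :=
  \max_(v : T) degree adj v.

Definition independent (T : finType) (adj : rel T) (Y : {set T}) : Prop :=
  forall x y, x \in Y -> y \in Y -> ~~ adj x y.

Definition cut_edge (T : finType) (adj : rel T) (Y : {set T}) (f : {set T}) : Prop :=
  exists x y, [/\ adj x y, x \in Y, y \notin Y & f = [set x; y]].

Definition in_common_triangle (T : finType) (adj : rel T) (f g : {set T}) : Prop :=
  exists a b c, [/\ adj a b, adj b c, adj a c,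
    f \subset [set a; b; c] & g \subset [set a; b; c]].

Definition good (T : finType) (adj : rel T) (F : {set T} -> Prop) : Prop :=
  forall f g, F f -> F g -> is_edge adj f -> is_edge adj g -> f <> g ->
    ~ ( ([disjoint f & g] /\ exists x y, [/\ x \in f, y \in g & adj x y])
        \/ in_common_triangle adj f g ).

(* Main.v *)
Require Import Defs.
From Stdlib Require Import Reals Lra Lia.
Section RealPart.
Local Open Scope R_scope.

Lemma exp_pow_n (x : R) (n : nat) : exp x ^ n = exp (INR n * x).
Proof.
induction n as [|n IH]; cbn [pow].
- rewrite Rmult_0_l, exp_0; reflexivity.
- rewrite IH, <- exp_plus, (S_INR n); f_equal; ring.
Qed.

Lemma one_minus_le_exp (q : R) : 1 - q <= exp (- q).
Proof.
destruct (Req_dec q 0) as [->|h].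
- rewrite Ropp_0, exp_0; lra.
- assert (h' : - q <> 0) by lra. pose proof (exp_ineq1 _ h'). lra.
Qed.

Lemma tail_bound (D k : nat) (q : R) :
  41 <= INR D -> 27 * INR D * ln (INR D) <= INR k ->
  1 / (6 * INR D) <= q -> q <= 1 ->
  (1 - q) ^ k * (INR D) ^ 4 <= 1.
Proof.
intros hD hk hq1 hq2.
assert (Dpos : 0 < INR D) by lra.
assert (lnpos : 0 < ln (INR D)).
{ rewrite <- ln_1. apply ln_increasing; lra. }
assert (h1 : (1 - q) ^ k <= exp (- q) ^ k).
{ apply pow_incr; split; [lra|apply one_minus_le_exp]. }
rewrite exp_pow_n in h1.
assert (h2 : exp (INR k * - q) <= exp (- (4 * ln (INR D)))).
{ cut (INR k * - q <= - (4 * ln (INR D))).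
  { intros [hl|he]; [left; apply exp_increasing; exact hl|rewrite he; right; reflexivity]. }
  assert (INR k * q >= 4 * ln (INR D)).
  { assert (INR k * q >= INR k * (1 / (6 * INR D))).
    { apply Rle_ge, Rmult_le_compat_l; [apply pos_INR|lra]. }
    assert (INR k * (1 / (6 * INR D)) >= 27 * INR D * ln (INR D) * (1 / (6 * INR D))).
    { apply Rle_ge, Rmult_le_compat_r; [|lra].
      unfold Rdiv; rewrite Rmult_1_l; left; apply Rinv_0_lt_compat; lra. }
    assert (27 * INR D * ln (INR D) * (1 / (6 * INR D)) = 9 / 2 * ln (INR D)).
    { field; lra. }
    lra. }
  lra. }
assert (h3 : exp (- (4 * ln (INR D))) * INR D ^ 4 = 1).
{ rewrite exp_Ropp.
  replace (4 * ln (INR D)) with (INR 4 * ln (INR D)) by (simpl; ring).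
  rewrite <- exp_pow_n, exp_ln by lra. field; lra. }
assert (0 <= INR D ^ 4) by (apply pow_le; lra).
nra.
Qed.

Lemma e_bound (m : nat) : (1 <= m)%nat ->
  INR (S m) ^ m <= INR m ^ m * exp 1.
Proof.
intros hm.
assert (mpos : 0 < INR m) by (apply lt_0_INR; lia).
assert (e1 : INR (S m) = INR m * (1 + / INR m)) by (rewrite S_INR; field; lra).
rewrite e1, Rpow_mult_distr.
apply Rmult_le_compat_l; [apply pow_le; lra|].
assert (h : (1 + / INR m) ^ m <= exp (/ INR m) ^ m).
{ apply pow_incr; split.
  - assert (0 < / INR m) by (apply Rinv_0_lt_compat; lra). lra.
  - destruct (Req_dec (/ INR m) 0) as [h0|h0].
    + rewrite h0, exp_0; lra.
    + left; apply exp_ineq1; exact h0. }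
rewrite exp_pow_n in h.
replace (INR m * / INR m) with 1 in h by (field; lra).
exact h.
Qed.

Lemma le_div_aux (a x p : R) : 0 < p -> a * p <= x -> a <= x / p.
Proof.
intros hp h. replace a with (a * p / p) by (field; lra).
unfold Rdiv; apply Rmult_le_compat_r; [left; apply Rinv_0_lt_compat; lra|lra].
Qed.
Lemma div_le_aux (a x p : R) : 0 < p -> x <= a * p -> x / p <= a.
Proof.
intros hp h. replace a with (a * p / p) by (field; lra).
unfold Rdiv; apply Rmult_le_compat_r; [left; apply Rinv_0_lt_compat; lra|lra].
Qed.

Lemma q_bound (D m : nat) : (41 <= D)%nat -> S m = (2 * D)%nat ->
  1 / (6 * INR D) <= INR m ^ m / INR (S m) ^ (S m) <= 1.
Proof.
intros hD hm.
assert (m1 : (1 <= m)%nat) by lia.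
assert (mpos : 0 < INR m) by (apply lt_0_INR; lia).
assert (eM : INR (S m) = 2 * INR D) by (rewrite hm, mult_INR; simpl; ring).
assert (Dpos : 0 < INR D) by (apply lt_0_INR; lia).
assert (D41 : INR 41 <= INR D) by (apply le_INR; lia).
simpl in D41.
pose proof (e_bound m m1) as he.
pose proof exp_le_3 as e3.
assert (Pm : 0 < INR (S m) ^ m) by (apply pow_lt; rewrite eM; lra).
assert (Pmm : 0 < INR m ^ m) by (apply pow_lt; lra).
assert (hle : INR m ^ m <= INR (S m) ^ m).
{ apply pow_incr; split; [lra|]. rewrite S_INR; lra. }
cbn [pow].
assert (PP : 0 < INR (S m) * INR (S m) ^ m) by (apply Rmult_lt_0_compat; [rewrite eM|]; lra).
split.
- apply le_div_aux; [exact PP|].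
  rewrite eM in *.
  replace (1 / (6 * INR D) * (2 * INR D * (2 * INR D) ^ m)) with ((2 * INR D) ^ m / 3)
    by (field; lra).
  assert (INR m ^ m * exp 1 <= INR m ^ m * 3) by (apply Rmult_le_compat_l; lra).
  lra.
- apply div_le_aux; [exact PP|].
  assert (1 <= INR (S m)) by (rewrite eM; lra). 
  nra.
Qed.

End RealPart.
From mathcomp Require Import all_boot zify.
Set Implicit Arguments. Unset Strict Implicit. Unset Printing Implicit Defensive.

Lemma card_bigcup_le (J T : finType) (S : {set J}) (F : J -> {set T}) :
  #|\bigcup_(i in S) F i| <= \sum_(i in S) #|F i|.
Proof.
elim/big_rec2: _ => [|i A n _ IH]; first by rewrite cards0.
rewrite (leq_trans (leq_card_setU _ _)) //; lia.
Qed.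

Section Swap.
Variables (V W : finType) (U : {set V}).
Definition mix (s r : {ffun V -> W}) : {ffun V -> W} :=
  [ffun v => if v \in U then r v else s v].

Lemma swap_indep (A B : pred {ffun V -> W}) :
  (forall s1 s2 : {ffun V -> W}, (forall v, v \in U -> s1 v = s2 v) -> A s1 = A s2) ->
  (forall s1 s2 : {ffun V -> W}, (forall v, v \notin U -> s1 v = s2 v) -> B s1 = B s2) ->
  #|[set s | A s && B s]| * #|{ffun V -> W}| = #|A| * #|B|.
Proof.
move=> hA hB.
pose phi (p : {ffun V -> W} * {ffun V -> W}) := (mix p.1 p.2, mix p.2 p.1).
have phiK : involutive phi.
  case=> s r; rewrite /phi /=; congr pair; apply/ffunP => v; rewrite !ffunE;
  by case: (v \in U).
have inj : injective phi by apply: inv_inj.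
have e1 : #|A| * #|B| = #|setX [set s | B s] [set s | A s]|.
  by rewrite cardsX !cardsE mulnC.
have e2 : #|[set s | A s && B s]| * #|{ffun V -> W}| =
   #|setX [set s | A s && B s] [set: {ffun V -> W}]|.
  by rewrite cardsX cardsT.
rewrite e1 e2 -(card_preimset _ inj); apply: eq_card => -[s r].
rewrite !inE /= andbT.
have -> : A (mix r s) = A s by apply: hA => v vU; rewrite ffunE vU.
have -> : B (mix s r) = B s by apply: hB => v vU; rewrite ffunE (negbTE vU).
by rewrite andbC.
Qed.
End Swap.

Section LLL.
Variables (V W J : finType) (U : J -> {set V}) (A : J -> pred {ffun V -> W}).
Variables (a b d : nat).
Hypothesis b_gt0 : 0 < b.
Hypothesis d_gt0 : 0 < d.
Hypothesis hadb : 4 * a * d <= b.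
Hypothesis hloc : forall j (s1 s2 : {ffun V -> W}), (forall v, v \in U j -> s1 v = s2 v) -> A j s1 = A j s2.
Hypothesis hprob : forall j, #|A j| * b <= a * #|{ffun V -> W}|.
Definition dep j := [set s | [exists v, (v \in U j) && (v \in U s)]].
Hypothesis hdep : forall j, #|dep j| <= d.

Definition avoid (S : {set J}) := [set s : {ffun V -> W} | [forall i in S, ~~ A i s]].
Definition hitav j (S : {set J}) := [set s : {ffun V -> W} | A j s && [forall i in S, ~~ A i s]].

Lemma avoid_sub (S1 S2 : {set J}) : S1 \subset S2 -> avoid S2 \subset avoid S1.
Proof.
move=> sS; apply/subsetP => s; rewrite !inE => /forall_inP h.
by apply/forall_inP => i iS; apply: h; apply: (subsetP sS).
Qed.

Lemma hitav_sub j (S1 S2 : {set J}) : S1 \subset S2 -> hitav j S2 \subset hitav j S1.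
Proof.
move=> sS; apply/subsetP => s; rewrite !inE => /andP[-> /forall_inP h] /=.
by apply/forall_inP => i iS; apply: h; apply: (subsetP sS).
Qed.

Lemma step_indep j (S : {set J}) : S :&: dep j = set0 -> 
  #|hitav j S| * #|{ffun V -> W}| = #|A j| * #|avoid S|.
Proof.
move=> hS.
have := @swap_indep V W (U j) (A j) (fun s => [forall i in S, ~~ A i s]).
rewrite /hitav /avoid => -> //.
- by rewrite cardsE.
- exact: hloc.
move=> s1 s2 h; apply: eq_forallb_in => i iS; congr negb; apply: hloc => v vi.
apply: h; apply/negP => vj.
have : i \in S :&: dep j by rewrite inE iS inE; apply/existsP; exists v; rewrite vj vi.
by rewrite hS inE.
Qed.

Variable w0 : W.
Lemma Omega_gt0 : 0 < #|{ffun V -> W}|.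
Proof. by apply/card_gt0P; exists [ffun=> w0]. Qed.

Lemma claim_gen (S : {set J}) j : j \notin S ->
  (forall i, i \in S :&: dep j ->
     #|hitav i (S :\: dep j)| * b <= 2 * a * #|avoid (S :\: dep j)|) ->
  #|hitav j S| * b <= 2 * a * #|avoid S|.
Proof.
move=> jS H.
set S2 := S :\: dep j; set S1 := S :&: dep j.
have sub2 : S2 \subset S by apply: subsetDl.
have k1 : #|hitav j S2| * b <= a * #|avoid S2|.
  have e := step_indep (S := S2) (j := j).
  have e' : S2 :&: dep j = set0.
    by apply/setP => x; rewrite /S2 !inE; case: [exists v, _]; rewrite ?andbF.
  move: (e e') => {e'} {}e.
  have hp := hprob j. have hO := Omega_gt0.
  have : #|hitav j S2| * b * #|{ffun V -> W}| <= a * #|avoid S2| * #|{ffun V -> W}|.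
    rewrite mulnAC e mulnAC (mulnAC a); exact: leq_mul hp (leqnn _).
  by rewrite leq_pmul2r.
have k2 : #|hitav j S| <= #|hitav j S2| by apply/subset_leq_card/hitav_sub.
have cover : avoid S2 \subset avoid S :|: \bigcup_(i in S1) hitav i S2.
  apply/subsetP => s sA; rewrite inE.
  case sS: (s \in avoid S) => //=.
  move/negbT: sS; rewrite inE negb_forall_in => /exists_inP[i iS].
  rewrite negbK => Ai.
  apply/bigcupP; exists i.
    rewrite inE iS /=; apply/negPn/negP => ndep.
    have iS2 : i \in S2 by rewrite /S2 inE ndep iS.
    move: sA; rewrite inE => /forall_inP /(_ i iS2).
    by rewrite Ai.
  by rewrite inE Ai; move: sA; rewrite inE.
have k3 : #|avoid S2| <= #|avoid S| + \sum_(i in S1) #|hitav i S2|.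
  apply: (leq_trans (subset_leq_card cover)).
  apply: (leq_trans (leq_card_setU _ _)).
  by rewrite leq_add2l card_bigcup_le.
have k4 : (\sum_(i in S1) #|hitav i S2|) * b <= #|S1| * (2 * a * #|avoid S2|).
  rewrite -sum_nat_const big_distrl /=; apply: leq_sum => i iS1.
  exact: H.
have k5 : #|S1| <= d.
  apply: leq_trans (hdep j); apply/subset_leq_card/subsetIr.
set X := #|avoid S2| in k1 k3 k4 *.
set Yv := #|avoid S| in k3 *.
set Z := \sum_(i in S1) #|hitav i S2| in k3 k4.
have h1 := leq_mul (leqnn b) k3.
have h2 := leq_mul k5 (leqnn (2*a*X)).
have k6 : b * X <= b * Yv + 2 * a * d * X by nia.
have k7 : b * X <= b * (2 * Yv) by nia.
rewrite leq_pmul2l // in k7.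
nia.
Qed.

Lemma main_claim n : forall S : {set J}, #|S| <= n -> forall j, j \notin S ->
  #|hitav j S| * b <= 2 * a * #|avoid S|.
Proof.
elim: n => [|n IH] S hS j jS; apply: claim_gen => // i.
  move: hS; rewrite leqn0 cards_eq0 => /eqP ->; by rewrite set0I inE.
move=> iS1; apply: IH.
  have : #|S :\: dep j| < #|S|.
    apply: proper_card; rewrite properE subsetDl /=.
    apply/subsetPn; exists i; first by move: iS1; rewrite inE => /andP[].
    by rewrite inE; move: iS1; rewrite inE => /andP[-> ->].
  lia.
by move: iS1; rewrite !inE => /andP[_ ->].
Qed.

Lemma avoid_pos n : forall S : {set J}, #|S| = n -> 0 < #|avoid S|.
Proof.
elim: n => [|n IH] S hS.
  move/eqP: hS; rewrite cards_eq0 => /eqP ->.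
  rewrite (_ : avoid set0 = setT) ?cardsT ?Omega_gt0 //.
  by apply/setP => s; rewrite !inE; apply/forall_inP => i; rewrite inE.
have [j jS] : exists j, j \in S.
  by apply/set0Pn; rewrite -card_gt0 hS.
set S' := S :\ j.
have hS' : #|S'| = n by move: hS; rewrite (cardsD1 j) jS; case.
have pos := IH S' hS'.
have jS' : j \notin S' by rewrite !inE eqxx.
have h := main_claim (leqnn _) jS'.
have e : #|avoid S'| = #|avoid S| + #|hitav j S'|.
  rewrite -cardsUI.
  have -> : avoid S :&: hitav j S' = set0.
    apply/setP => s; rewrite !inE; apply/negP => /andP[/forall_inP h1 /andP[h2 _]].
    by move: (h1 j jS); rewrite h2.
  rewrite cards0 addn0; apply: eq_card => s; rewrite !inE.
  have subS : forall s, [forall i in S, ~~ A i s] -> [forall i in S', ~~ A i s].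
    move=> s0 /forall_inP h1; apply/forall_inP => i; rewrite !inE => /andP[_]; exact: h1.
  case Aj: (A j s) => /=.
    apply/idP/idP => [->|/orP[/subS //|//]]; by rewrite orbT.
  rewrite orbF; apply/idP/idP => [/forall_inP h1|/subS //].
  apply/forall_inP => i iS; case: (i =P j) => [->|/eqP ij]; first by rewrite Aj.
  by apply: h1; rewrite !inE ij.
have a4 : 4 * a <= b by apply: leq_trans hadb; rewrite leq_pmulr.
have ab : 2 * a < b by lia.
rewrite lt0n; apply/negP => /eqP z; rewrite z add0n in e; rewrite -e in h.
have : 2 * a * #|avoid S'| < b * #|avoid S'| by rewrite ltn_pmul2r.
lia.
Qed.

Theorem LLL_exists : exists s, forall j, ~~ A j s.
Proof.
have := avoid_pos (erefl #|[set: J]|).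
case/card_gt0P => s; rewrite inE => /forall_inP h; exists s => j.
by apply: h; rewrite inE.
Qed.

End LLL.
Set Implicit Arguments. Unset Strict Implicit. Unset Printing Implicit Defensive.

Section App.
Variables (T : finType) (adj : rel T) (Y : {set T}) (k M : nat).
Hypothesis sym : symmetric adj.
Hypothesis irr : irreflexive adj.
Hypothesis indep : independent adj Y.
Variable zero : 'I_M.

Definition Nb v := [set u | adj v u].
Definition cutb y x := [&& adj y x, y \in Y & x \notin Y].
Definition NB y x := Nb y :|: Nb x.
Definition inZ (s : {ffun T * 'I_k -> 'I_M}) i v := (v \notin Y) && (s (v,i) == zero).
Definition covered s y x i :=
  inZ s i x && [forall v, ((v \in NB y x) && (v != x)) ==> ~~ inZ s i v].

Lemma covP s y x i : covered s y x i ->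
  inZ s i x /\ forall v, (adj y v \/ adj x v) -> v != x -> ~~ inZ s i v.
Proof.
case/andP=> hx /forallP h; split => // v hv vx.
by case: hv => hv; move: (h v); rewrite /NB !inE vx hv ?orbT.
Qed.

Lemma tri_adj a b c u v : adj a b -> adj b c -> adj a c ->
  u \in [set a; b; c] -> v \in [set a; b; c] -> u != v -> adj u v.
Proof.
move=> ab bc ac; rewrite !inE => /orP[/orP[]|] /eqP-> /orP[/orP[]|] /eqP->;
  rewrite ?eqxx // => _; by rewrite // sym.
Qed.

Lemma no_conflict s i y1 x1 y2 x2 : cutb y1 x1 -> cutb y2 x2 ->
  covered s y1 x1 i -> covered s y2 x2 i -> [set y1; x1] <> [set y2; x2] ->
  ~ ( ([disjoint [set y1; x1] & [set y2; x2]] /\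
        exists a b, [/\ a \in [set y1; x1], b \in [set y2; x2] & adj a b])
      \/ in_common_triangle adj [set y1; x1] [set y2; x2]).
Proof.
case/and3P=> a1 Y1 X1; case/and3P=> a2 Y2 X2.
move=> /covP[z1 c1] /covP[z2 c2] neq.
case.
- case=> dis [a [b [ha hb ab]]].
  have d : forall u, u \in [set y1; x1] -> (u \in [set y2; x2]) = false.
    by move=> u hu; apply: (disjointFr dis hu).
  have x1x2 : x1 != x2 by apply/negP => /eqP e; move: (d x2); rewrite !inE e !eqxx !orbT => /(_ isT).
  have x1y2 : x1 != y2 by apply/negP => /eqP e; move: (d y2); rewrite !inE e !eqxx !orbT => /(_ isT).
  have y1x2 : y1 != x2 by apply/negP => /eqP e; move: (d x2); rewrite !inE e !eqxx ?orbT => /(_ isT).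
  move: ha hb ab; rewrite !inE => /orP[]/eqP-> /orP[]/eqP-> ab.
  + by move: (indep Y1 Y2); rewrite ab.
  + by move: (c1 x2 (or_introl ab)); rewrite eq_sym x1x2 z2 => /(_ isT).
  + by move: (c2 x1 (or_introl (etrans (sym _ _) ab))); rewrite x1x2 z1 => /(_ isT).
  + by move: (c1 x2 (or_intror ab)); rewrite eq_sym x1x2 z2 => /(_ isT).
- case=> [a [b [c [ab bc ac sf sg]]]].
  have in1 : forall u, u \in [set y1; x1] -> u \in [set a; b; c] by apply/subsetP.
  have in2 : forall u, u \in [set y2; x2] -> u \in [set a; b; c] by apply/subsetP.
  have ty1 := in1 y1 (set21 _ _). have tx1 := in1 x1 (set22 _ _).
  have ty2 := in2 y2 (set21 _ _). have tx2 := in2 x2 (set22 _ _).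
  have ey : y1 = y2.
    apply/eqP; apply/negPn/negP => ne.
    by move: (indep Y1 Y2); rewrite (tri_adj ab bc ac ty1 ty2 ne).
  have ne : x1 != x2 by apply/negP => /eqP ex; apply: neq; rewrite ey ex.
  have := tri_adj ab bc ac tx1 tx2 ne.
  by move=> h; move: (c1 x2 (or_intror h)); rewrite eq_sym ne z2 => /(_ isT).
Qed.

Definition Aev (p : T * T) : pred {ffun T * 'I_k -> 'I_M} :=
  fun s => cutb p.1 p.2 && [forall i, ~~ covered s p.1 p.2 i].
Definition Uev (p : T * T) : {set T * 'I_k} :=
  if cutb p.1 p.2 then [set q | q.1 \in NB p.1 p.2] else set0.

Lemma hloc j (s1 s2 : {ffun T * 'I_k -> 'I_M}) :
  (forall v, v \in Uev j -> s1 v = s2 v) -> Aev j s1 = Aev j s2.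
Proof.
case: j => y x; rewrite /Aev /Uev /=.
case cj: (cutb y x) => //= h.
have hx : x \in NB y x by rewrite /NB !inE; case/and3P: cj => ->.
have eZ : forall i v, v \in NB y x -> inZ s1 i v = inZ s2 i v.
  by move=> i v vN; rewrite /inZ h // inE.
apply: eq_forallb => i; rewrite /covered eZ //; congr (~~ (_ && _)).
apply: eq_forallb => v; case vN: (v \in NB y x) => //=.
by rewrite eZ.
Qed.


Variable D : nat.
Hypothesis hdeg : forall v, #|Nb v| <= D.

Lemma NB_card y x : #|NB y x| <= 2 * D.
Proof.
apply: leq_trans (leq_card_setU _ _) _.
by have := hdeg y; have := hdeg x; lia.
Qed.

Section Count.
Variables y x : T.
Hypothesis cj : cutb y x.

Definition Rset := [set v | (v \in NB y x) && (v != x) && (v \notin Y)].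

Lemma Rset_card : #|Rset| <= (2 * D).-1.
Proof.
have xN : x \in NB y x by rewrite /NB !inE; case/and3P: cj => ->.
have : Rset \subset NB y x :\ x.
  by apply/subsetP => v; rewrite !inE => /andP[/andP[-> ->] _].
move/subset_leq_card => h1.
have h2 := NB_card y x; rewrite (cardsD1 x) xN /= in h2; lia.
Qed.

Definition cov1 (t : {ffun T -> 'I_M}) :=
  (t x == zero) && [forall v, (v \in Rset) ==> (t v != zero)].

Definition cur (s : {ffun T * 'I_k -> 'I_M}) : {ffun 'I_k -> {ffun T -> 'I_M}} :=
  [ffun i => [ffun v => s (v, i)]].
Definition unc (t : {ffun 'I_k -> {ffun T -> 'I_M}}) : {ffun T * 'I_k -> 'I_M} :=
  [ffun p => t p.2 p.1].

Lemma cur_bij : bijective cur.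
Proof.
exists unc.
  by move=> s; apply/ffunP => -[v i]; rewrite !ffunE.
by move=> t; apply/ffunP => i; apply/ffunP => v; rewrite !ffunE.
Qed.

Lemma cov_cur s i : covered s y x i = cov1 (cur s i).
Proof.
case/and3P: cj => _ _ xY.
rewrite /covered /cov1 /inZ xY /= !ffunE; congr (_ && _).
apply: eq_forallb => v; rewrite /Rset inE ffunE.
by case: (v \in NB y x); case: (v != x); case: (v \in Y).
Qed.

Definition Cbar := [set t | ~~ cov1 t].
Definition Cset := [set t | cov1 t].

Lemma card_A : #|Aev (y, x)| = #|Cbar| ^ k.
Proof.
rewrite -[k in _ ^ k]card_ord -card_ffun_on.
rewrite -(on_card_preimset (onW_bij _ cur_bij)).
apply: eq_card => s; rewrite /Aev /= cj /= inE.
apply/forallP/ffun_onP => h i; have := h i; by rewrite inE cov_cur.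
Qed.

Lemma prod_const_pred (P : pred T) n : \prod_(v | P v) n = n ^ #|P|.
Proof. by rewrite -prod_nat_const. Qed.

Lemma card_C : exists a1 a2, [/\ a1 + a2 = #|T|.-1, a1 <= #|Rset| &
   #|Cset| = (M.-1) ^ a1 * M ^ a2].
Proof.
pose F (v : T) : pred 'I_M :=
  if v == x then pred1 zero else if v \in Rset then predC1 zero else predT.
have eC : #|Cset| = #|family F|.
  apply: eq_card => t; rewrite inE /cov1; apply/idP/familyP.
    case/andP=> /eqP tx /forallP h v; rewrite /F.
    case: (v =P x) => [->|_]; first by rewrite inE tx.
    by case vR: (v \in Rset); rewrite // inE; move: (h v); rewrite vR.
  move=> h; apply/andP; split.
    by move: (h x); rewrite /F eqxx inE.
  apply/forallP => v; apply/implyP => vR; move: (h v); rewrite /F vR.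
  have -> : (v == x) = false.
    by apply/negbTE; move: vR; rewrite inE => /andP[/andP[_ ->]].
  by rewrite inE.
rewrite eC card_family foldrE big_map big_enum /=.
rewrite (bigD1 x) //= {1}/F eqxx card1 mul1n.
rewrite (eq_bigr (fun v => if v \in Rset then M.-1 else M)); last first.
  move=> v vx; rewrite /F (negbTE vx).
  by case: (v \in Rset); rewrite ?cardC1 card_ord.
rewrite (bigID (fun v => v \in Rset)) /=.
rewrite (eq_bigr (fun _ => M.-1)); last by move=> v /andP[_ ->].
rewrite [X in _ * X](eq_bigr (fun _ => M)); last by move=> v /andP[_ /negbTE ->].
rewrite !prod_const_pred.
set P1 := (X in M.-1 ^ #|X|); set P2 := (X in M ^ #|X|).
exists #|P1|, #|P2|; split => //.
  rewrite -(cardC1 x) -(cardID (mem Rset) (predC1 x)); congr (_ + _); apply: eq_card => v;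
  by rewrite /P1 /P2 !unfold_in /= andbC.
by apply: subset_leq_card; apply/subsetP => v; rewrite /P1 unfold_in /= => /andP[_ h]; exact: h.
Qed.

End Count.

Lemma pair_card1 (P : pred T) (Q : T -> T -> bool) m :
  (forall u, #|[set z | Q u z]| <= m) ->
  #|[set s : T * T | P s.1 && Q s.1 s.2]| <= #|P| * m.
Proof.
move=> hQ.
have sub : [set s : T * T | P s.1 && Q s.1 s.2] \subset
   \bigcup_(u in [set u | P u]) ((fun z => (u, z)) @: [set z | Q u z]).
  apply/subsetP => -[u z]; rewrite inE /= => /andP[pu quz].
  by apply/bigcupP; exists u; rewrite ?inE //; apply/imsetP; exists z; rewrite ?inE.
apply: leq_trans (subset_leq_card sub) _.
apply: leq_trans (card_bigcup_le _ _) _.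
have -> : #|P| = #|[set u | P u]| by apply: eq_card => u; rewrite inE.
rewrite -sum_nat_const; apply: leq_sum => u _.
exact: leq_trans (leq_imset_card _ _) (hQ u).
Qed.

Lemma pair_card2 (P : pred T) (Q : T -> T -> bool) m :
  (forall u, #|[set z | Q u z]| <= m) ->
  #|[set s : T * T | P s.2 && Q s.2 s.1]| <= #|P| * m.
Proof.
move=> hQ.
have sub : [set s : T * T | P s.2 && Q s.2 s.1] \subset
   \bigcup_(u in [set u | P u]) ((fun z => (z, u)) @: [set z | Q u z]).
  apply/subsetP => -[z u]; rewrite inE /= => /andP[pu quz].
  by apply/bigcupP; exists u; rewrite ?inE //; apply/imsetP; exists z; rewrite ?inE.
apply: leq_trans (subset_leq_card sub) _.
apply: leq_trans (card_bigcup_le _ _) _.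
have -> : #|P| = #|[set u | P u]| by apply: eq_card => u; rewrite inE.
rewrite -sum_nat_const; apply: leq_sum => u _.
exact: leq_trans (leq_imset_card _ _) (hQ u).
Qed.

Lemma dep_card j : #|dep Uev j| <= 4 * D ^ 3.
Proof.
case: j => y x.
case cj: (cutb y x); last first.
  rewrite (_ : dep Uev (y, x) = set0) ?cards0 //.
  apply/setP => s; rewrite !inE; apply/negbTE; rewrite negb_exists.
  by apply/forallP => v; rewrite /Uev /= cj inE.
have sub : dep Uev (y, x) \subset \bigcup_(w in NB y x)
   ([set s : T * T | adj w s.1 && adj s.1 s.2] :|: [set s : T * T | adj w s.2 && adj s.2 s.1]).
  apply/subsetP => -[y' x']; rewrite inE => /existsP[[w i]].
  rewrite /Uev /= cj; case cs: (cutb y' x'); last by rewrite in_set0 andbF.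
  rewrite !inE /= => /andP[wN].
  case/and3P: cs => a' _ _.
  move=> h; apply/bigcupP; exists w; first by move: wN; rewrite /NB !inE.
  rewrite !inE /=; case/orP: h => h.
    by rewrite (sym w y') h a'.
  by rewrite (sym w x') h (sym x' y') a' orbT.
apply: leq_trans (subset_leq_card sub) _.
apply: leq_trans (card_bigcup_le _ _) _.
have hb : forall w, #|[set s : T * T | adj w s.1 && adj s.1 s.2] :|: [set s : T * T | adj w s.2 && adj s.2 s.1]| <= 2 * (D * D).
  move=> w; apply: leq_trans (leq_card_setU _ _) _.
  have hP : #|adj w| <= D by have := hdeg w; rewrite /Nb; rewrite cardsE.
  have hQ : forall u, #|[set z | adj u z]| <= D by exact: hdeg.
  have h1 := pair_card1 (adj w) hQ.
  have h2 := pair_card2 (adj w) hQ.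
  have : #|adj w| * D <= D * D by rewrite leq_mul2r hP orbT.
  lia.
apply: (@leq_trans (\sum_(w in NB y x) 2 * (D * D))); first by apply: leq_sum => w _; exact: hb.
rewrite sum_nat_const.
have := NB_card y x.
move=> h; have : #|NB y x| * (2 * (D * D)) <= 2 * D * (2 * (D * D)) by rewrite leq_mul2r h orbT.
rewrite (_ : 4 * D ^ 3 = 2 * D * (2 * (D * D))) //.
by rewrite !expnS expn0; lia.
Qed.
End App.
From Stdlib Require Import Reals Lra.
From mathcomp Require Import zify.
Set Implicit Arguments. Unset Strict Implicit. Unset Printing Implicit Defensive.

Lemma INR_expn m n : INR (expn m n) = (pow (INR m) n)%R.
Proof.
elim: n => [|n IH]; first by rewrite expn0.
by rewrite expnS -multE mult_INR IH.
Qed.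

Lemma nat_ineq m n a1 a2 : 0 < n -> a1 + a2 = n.-1 -> a1 <= m ->
  expn m m * expn m.+1 n <= expn m a1 * expn m.+1 a2 * expn m.+1 m.+1.
Proof.
move=> n0 ha hm.
have -> : expn m m = expn m a1 * expn m (m - a1) by rewrite -expnD subnKC.
have h1 : expn m (m - a1) <= expn m.+1 (m - a1).
  case: (posnP (m - a1)) => [->|p]; first by [].
  by rewrite leq_exp2r.
rewrite -!mulnA.
have -> : expn m.+1 a2 * expn m.+1 m.+1 = expn m.+1 (m - a1) * expn m.+1 n.
  by rewrite -!expnD; congr (expn _ _); lia.
apply: leq_mul => //; exact: leq_mul.
Qed.

Lemma real_combine (D k m n c cb : nat) : 41 <= D -> m.+1 = 2 * D ->
  (27 * INR D * ln (INR D) <= INR k)%R ->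
  cb + c = expn m.+1 n -> expn m m * expn m.+1 n <= c * expn m.+1 m.+1 ->
  expn cb k * expn D 4 <= expn (expn m.+1 n) k.
Proof.
move=> hD hm hk e hc.
have hq := q_bound D m (elimT leP hD) (ltac:(rewrite multE; exact hm)).
case: hq => hq1 hq2.
have hD' : (41 <= INR D)%R.
  have := le_INR 41 D (elimT leP hD); by rewrite [INR 41]/=; lra.
have ht := tail_bound D k _ hD' hk hq1 hq2.
set q := (pow (INR m) m / pow (INR m.+1) m.+1)%R in hq1 hq2 ht.
apply/leP; apply: INR_le.
rewrite -multE mult_INR (INR_expn cb) (INR_expn D) (INR_expn (expn m.+1 n)).
set Om := INR (expn m.+1 n).
have Ompos : (0 < Om)%R by rewrite /Om; apply: lt_0_INR; apply/ltP; rewrite expn_gt0.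
have eR : (INR cb + INR c = Om)%R by rewrite -plus_INR plusE e.
have hcR : (pow (INR m) m * Om <= INR c * pow (INR m.+1) m.+1)%R.
  by rewrite /Om -!INR_expn -!mult_INR !multE; apply: le_INR; apply/leP.
have Pp : (0 < pow (INR m.+1) m.+1)%R by apply: pow_lt; apply: lt_0_INR; apply/ltP.
have hqc : (q * Om <= INR c)%R.
  rewrite /q; apply: (Rmult_le_reg_r (pow (INR m.+1) m.+1)) => //.
  have -> : (pow (INR m) m / pow (INR m.+1) m.+1 * Om * pow (INR m.+1) m.+1 = pow (INR m) m * Om)%R.
    by field; lra.
  exact: hcR.
have hcb : (INR cb <= Om * (1 - q))%R by lra.
have hcb0 : (0 <= INR cb)%R by apply: pos_INR.
have h1 : (pow (INR cb) k <= pow (Om * (1 - q)) k)%R by apply: pow_incr; split.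
rewrite Rpow_mult_distr in h1.
have h4 : (0 <= pow (INR D) 4)%R by apply: pow_le; apply: pos_INR.
have h5 : (0 <= pow Om k)%R by apply: pow_le; lra.
nra.
Qed.

Lemma prob_bound (T : finType) (adj : rel T) (Y : {set T}) (k D : nat)
  (zero : 'I_(2 * D)) (y x : T) :
  (forall v, #|Nb adj v| <= D) -> 41 <= D ->
  (27 * INR D * ln (INR D) <= INR k)%R -> cutb adj Y y x ->
  #|@Aev T adj Y k _ zero (y, x)| * expn D 4 <= 1 * #|{ffun T * 'I_k -> 'I_(2 * D)}|.
Proof.
move=> hdeg hD hk cj.
have [a1 [a2 [ea ha1 eC]]] := card_C adj Y zero y x.
have hR := Rset_card hdeg cj.
have n0 : 0 < #|T| by apply/card_gt0P; exists x.
have eCb : #|Cbar adj Y zero y x| + #|Cset adj Y zero y x| = expn (2 * D) #|T|.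
  rewrite addnC; have := cardsC (Cset adj Y zero y x); rewrite card_ffun card_ord => <-.
  congr (_ + _); apply: eq_card => t; rewrite !inE //.
rewrite card_A // mul1n card_ffun card_prod !card_ord expnM.
set m := (2 * D).-1 in eC hR.
have hm : m.+1 = 2 * D by rewrite /m prednK //; lia.
have eCb' : #|Cbar adj Y zero y x| + #|Cset adj Y zero y x| = expn m.+1 #|T| by rewrite hm.
have eC' : #|Cset adj Y zero y x| = expn m a1 * expn m.+1 a2 by rewrite eC hm.
have -> : expn (expn (2 * D) #|T|) k = expn (expn m.+1 #|T|) k by rewrite hm.
apply: (real_combine (m := m) (n := #|T|) (c := #|Cset adj Y zero y x|)) => //.
rewrite eC'; apply: nat_ineq => //; lia.
Qed.

Unset Implicit Arguments.

Theorem theorem3p2 (D k : nat) (T : finType) (adj : rel T) (Y : {set T}) :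
  41 <= D ->
  (* k = ceiling (27 * D * ln D) *)
  (INR k - 1 < 27 * INR D * ln (INR D) <= INR k)%R ->
  simple_graph adj ->
  max_degree adj = D ->
  independent adj Y ->
  exists c : {set T} -> 'I_k,
    forall i : 'I_k,
      good adj (fun f => cut_edge adj Y f /\ c f = i).
Proof.
move=> hD [hk1 hk2] [sym irr] hmax indep.
have hdeg : forall v, #|Nb adj v| <= D.
  move=> v; rewrite -hmax /max_degree; have h := @leq_bigmax T (fun w => degree adj w) v; exact: h.
have hDR : (41 <= INR D)%R.
  by have := le_INR 41 D (elimT leP hD); rewrite [INR 41]/=; lra.
have lnpos : (0 < ln (INR D))%R.
  rewrite -ln_1; apply: ln_increasing; lra.
have kpos : 0 < k.
  case: (posnP k) => // k0; move: hk2; rewrite k0 /=.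
  have : (0 < 27 * INR D * ln (INR D))%R by apply: Rmult_lt_0_compat => //; lra.
  lra.
have Dpos : 0 < 2 * D by lia.
pose zero : 'I_(2 * D) := Ordinal Dpos.
have b_gt0 : 0 < expn D 4 by rewrite expn_gt0; apply/orP; left; lia.
have d_gt0 : 0 < 4 * expn D 3 by rewrite muln_gt0 expn_gt0; apply/andP; split => //; apply/orP; left; lia.
have hadb : 4 * 1 * (4 * expn D 3) <= expn D 4.
  rewrite (expnS D 3) muln1 mulnA; apply: leq_mul => //; lia.
have hprob : forall j, #|@Aev T adj Y k _ zero j| * expn D 4 <= 1 * #|{ffun T * 'I_k -> 'I_(2 * D)}|.
  case=> y x; case cj: (cutb adj Y y x); first exact: prob_bound.
  have -> : #|@Aev T adj Y k _ zero (y, x)| = 0.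
    by apply: eq_card0 => s; rewrite /Aev /= cj.
  by [].
have hdep : forall j, #|dep (Uev adj Y k) j| <= 4 * expn D 3.
  by move=> j; apply: dep_card.
have [s hs] := LLL_exists b_gt0 d_gt0 hadb (@hloc T adj Y k _ zero) hprob hdep zero.
pose c (f : {set T}) : 'I_k :=
  if [pick i | [exists p : T * T, (f == [set p.1; p.2]) && cutb adj Y p.1 p.2
                                   && covered adj Y zero s p.1 p.2 i]]
  is Some i then i else Ordinal kpos.
exists c => i f g [cf ef] [cg eg] _ _ nfg.
have key : forall f, cut_edge adj Y f -> c f = i ->
    exists y x, [/\ f = [set y; x], cutb adj Y y x & covered adj Y zero s y x i].
  move=> f0 [y [x [axy yY xY ->]]] <-.
  have cj : cutb adj Y y x by apply/and3P.
  have := hs (y, x); rewrite /Aev /= cj /= negb_forall => /existsP[i1]; rewrite negbK => cv1.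
  rewrite /c; case: pickP => [i' /existsP[[p1 p2] /andP[/andP[/eqP fe cp] cv]]|none].
    by exists p1, p2; split.
  have := none i1.
  have -> : [exists p : T * T, ([set y; x] == [set p.1; p.2]) && cutb adj Y p.1 p.2
                                   && covered adj Y zero s p.1 p.2 i1] = true.
    by apply/existsP; exists (y, x); rewrite /= eqxx cj cv1.
  by [].
have [y1 [x1 [ef1 c1 v1]]] := key f cf ef.
have [y2 [x2 [eg2 c2 v2]]] := key g cg eg.
rewrite ef1 eg2 in nfg *.
have h := no_conflict sym indep c1 c2 v1 v2 nfg. exact: h.
Qed.
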